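(* Let $\tau$ be a trace and $S\in\mathsf{sched}(\tau)$. Let $S'$ be an interleaving with $S'\notin\mathsf{sched}(\tau)$. Then $S\not\approx S'$.
   Context: Setting: a generic asynchronous message-passing language. There are pairwise disjoint domains of process identifiers (pids), message values, and message tags, a domain of constraints, and a decidable function $\mathsf{match}$ with $\mathsf{match}(v,cs)\in\{\mathit{true},\mathit{false}\}$. An event has the form $p\!:\!a$ where $p$ is a pid and $a$ is one of the actions $\mathsf{spawn}(p')$, $\mathsf{send}(\ell,v,p')$ (message with tag $\ell$, value $v$, target $p'$), $\mathsf{rec}(\ell,cs)$ (reception of message with tag $\ell$ by a receive with constraint $cs$). For a finite sequence of events $S=(e_1,\dots,e_n)$, $e_i\prec_S e_j$ means $i<j$, and $\mathsf{actions}(p,S)$ is the sequence of actions of the events of pid $p$ in $S$, in order. A sequence $S=(p_1\!:\!a_1,\dots,p_n\!:\!a_n)$ is an interleaving with initial pid $p_1$ if: (1) each event $p_j\!:\!a_j$ is either preceded in $S$ by an event $p_i\!:\!\mathsf{spawn}(p_j)$ with $p_i\neq p_j$, or $p_j=p_1$; (2) each event $p_j\!:\!\mathsf{rec}(\ell,cs)$ is preceded in $S$ by an event $p_i\!:\!\mathsf{send}(\ell,v,p_j)$ with $\mathsf{match}(v,cs)=\mathit{true}$; (3) for each pair of events $p_i\!:\!\mathsf{send}(\ell,v,p_j)$, $p_j\!:\!\mathsf{rec}(\ell,cs)$ in $S$ and every $p_i\!:\!\mathsf{send}(\ell',v',p_j)\in S$ preceding $p_i\!:\!\mathsf{send}(\ell,v,p_j)$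 in $S$, either $\mathsf{match}(v',cs)=\mathit{false}$ or some event $p_j\!:\!\mathsf{rec}(\ell',cs')\in S$ precedes $p_j\!:\!\mathsf{rec}(\ell,cs)$ in $S$; (4) each pid appears as argument of $\mathsf{spawn}$ in at most one event and each tag appears as argument of $\mathsf{send}$ in at most one event. Happened-before: for an interleaving $S=(e_1,\dots,e_n)$ with $e_i=p_i\!:\!a_i$, $e_j=p_j\!:\!a_j$, $i<j$, we have $e_i\leadsto_S e_j$ if $p_i=p_j$, or $a_i=\mathsf{spawn}(p_j)$, or $a_i=\mathsf{send}(\ell,v,p_j)$ and $a_j=\mathsf{rec}(\ell,cs)$; and $\leadsto_S$ is closed under transitivity. Two events are independent if neither happened before the other. Two interleavings $S_1,S_2$ with the same initial pid are causally equivalent, $S_1\approx S_2$, if $S_2$ can be obtained from $S_1$ by a finite number of swaps of consecutive independent events. For an interleaving $S$ with pids $p_1,\dots,p_n$, $\mathit{tr}(S)=[p_1\mapsto\mathsf{actions}(p_1,S);\dots;p_n\mapsto\mathsf{actions}(p_n,S)]$. A trace with initial pid $p_0$ is a mapping $\tau$ from pids to sequences of actions such that $\tau=\mathit{tr}(S)$ for some interleaving $S$ with initial pid $p_0$. For a trace $\tau$ with initial pid $p_0$, $\mathsf{sched}(\tau)$ is the set of all interleavings $S$ with initial pid $p_0$ such that $\mathit{tr}(S)=\tau$. *)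

(* Defs.v *)
From mathcomp Require Import all_boot.
From Stdlib Require Import Relations.
Set Implicit Arguments. Unset Strict Implicit. Unset Printing Implicit Defensive.

Section Interleavings.
Variables (Pid Val Tag Cs : eqType) (match_ : Val -> Cs -> bool).

Inductive action :=
| Spawn of Pid
| Send of Tag & Val & Pid
| Rec of Tag & Cs.

Definition event : Type := (Pid * action)%type.

(* i-th event of S (0-based), if any *)
Definition ev (S : seq event) (i : nat) : option event := onth S i.

Definition actions (p : Pid) (S : seq event) : seq action :=
  [seq e.2 | e <- S & e.1 == p].

Definition interleaving (p0 : Pid) (S : seq event) : Prop :=
  (forall e, ev S 0 = Some e -> e.1 = p0) /\
  (forall j p a, ev S j = Some (p, a) ->
     p = p0 \/ exists i q, i < j /\ ev S i = Some (q, Spawn p) /\ q <> p) /\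
  (forall j p l cs, ev S j = Some (p, Rec l cs) ->
     exists i q v, i < j /\ ev S i = Some (q, Send l v p) /\ match_ v cs = true) /\
  (forall i j pi pj l v cs,
     ev S i = Some (pi, Send l v pj) -> ev S j = Some (pj, Rec l cs) ->
     forall k l' v', k < i -> ev S k = Some (pi, Send l' v' pj) ->
       match_ v' cs = false \/
       exists m cs', m < j /\ ev S m = Some (pj, Rec l' cs')) /\
  (forall i j q q' p, ev S i = Some (q, Spawn p) -> ev S j = Some (q', Spawn p) -> i = j) /\
  (forall i j q q' l v v' p p',
     ev S i = Some (q, Send l v p) -> ev S j = Some (q', Send l v' p') -> i = j).

Definition hb1 (S : seq event) (i j : nat) : Prop :=
  exists pi ai pj aj, i < j /\ ev S i = Some (pi, ai) /\ ev S j = Some (pj, aj) /\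
    (pi = pj \/ ai = Spawn pj \/
     exists l v cs, ai = Send l v pj /\ aj = Rec l cs).

Definition hb (S : seq event) : nat -> nat -> Prop := clos_trans nat (hb1 S).

Definition independent (S : seq event) (i j : nat) : Prop :=
  ~ hb S i j /\ ~ hb S j i.

Definition swap_step (S1 S2 : seq event) : Prop :=
  exists A e1 e2 B, S1 = A ++ e1 :: e2 :: B /\ S2 = A ++ e2 :: e1 :: B /\
    independent S1 (size A) (size A).+1.

Definition causally_equiv (S1 S2 : seq event) : Prop :=
  exists p0, interleaving p0 S1 /\ interleaving p0 S2 /\
    clos_refl_trans (seq event) swap_step S1 S2.

(* traces are represented as total maps Pid -> seq action; pids not
   occurring in S are mapped to the empty sequence *)
Definition tr (S : seq event) : Pid -> seq action := fun p => actions p S.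

Definition is_trace (p0 : Pid) (tau : Pid -> seq action) : Prop :=
  exists S, interleaving p0 S /\ forall p, tr S p = tau p.

Definition in_sched (p0 : Pid) (tau : Pid -> seq action) (S : seq event) : Prop :=
  interleaving p0 S /\ forall p, tr S p = tau p.

End Interleavings.

(* Main.v *)
Require Import Defs.
From mathcomp Require Import all_boot.
From Stdlib Require Import Relations.
Set Implicit Arguments.

Lemma onth_mid (T : Type) (A B : seq T) (x : T) k :
  onth (A ++ x :: B) (size A + k) = onth (x :: B) k.
Proof. by elim: A => //= a A IH. Qed.

Lemma swap_pid (Pid Val Tag Cs : eqType) 
  (A B : seq (event Pid Val Tag Cs)) e1 e2 :
  independent (A ++ e1 :: e2 :: B) (size A) (size A).+1 -> e1.1 <> e2.1.
Proof.
case=> H _ E; apply: H; apply: t_step.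
exists e1.1, e1.2, e2.1, e2.2; split => //.
split; first by rewrite /ev -[size A]addn0 onth_mid; case: e1 E.
split; first by rewrite /ev -addn1 onth_mid; case: e2 E.
by left.
Qed.

Lemma swap_inv (Pid Val Tag Cs : eqType) (S1 S2 : seq (event Pid Val Tag Cs)) :
  swap_step S1 S2 -> size S1 = size S2 /\ forall p, tr S1 p = tr S2 p.
Proof.
case=> A [e1] [e2] [B] [-> [-> Hi]].
have Hne := @swap_pid _ _ _ _ A B e1 e2 Hi.
split; first by rewrite !size_cat.
move=> p; rewrite /tr /actions !filter_cat !map_cat /=.
case: (eqVneq e1.1 p) => h1; case: (eqVneq e2.1 p) => h2 //=.
by exfalso; apply: Hne; rewrite h1 h2.
Qed.

Lemma rt_inv (Pid Val Tag Cs : eqType) (S1 S2 : seq (event Pid Val Tag Cs)) :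
  clos_refl_trans _ (@swap_step Pid Val Tag Cs) S1 S2 ->
  size S1 = size S2 /\ forall p, tr S1 p = tr S2 p.
Proof.
elim=> [x y /swap_inv //| x | x y z _ [h1 h2] _ [h3 h4]] //.
split; first by rewrite h1.
by move=> p; rewrite h2.
Qed.

Theorem theorem2 (Pid Val Tag Cs : eqType) (match_ : Val -> Cs -> bool)
  (p0 : Pid) (tau : Pid -> seq (action Pid Val Tag Cs)) :
  is_trace match_ p0 tau ->
  forall (S S' : seq (event Pid Val Tag Cs)) (q0 : Pid),
    in_sched match_ p0 tau S ->
    interleaving match_ q0 S' ->
    ~ in_sched match_ p0 tau S' ->
    ~ causally_equiv match_ S S'.
Proof.
move=> _ S S' q0 [HS Htr] _ Hn [p1 [H1 [H2 Hrt]]].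
have [Hsz Htr'] := rt_inv Hrt.
apply: Hn; split; last by move=> p; rewrite -Htr'.
case: S Hsz HS H1 Htr Htr' Hrt => [|e S] Hsz HS H1 _ _ _.
  by case: S' Hsz H2 => // _.
have := HS.1 e erefl; have := H1.1 e erefl => E1 E0; rewrite -E0 E1; exact: H2.
Qed.
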